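(* For every $k\ge1$ one has $u_{k;0}=b$ and, for all $m\ge0$, $$(b^{m+1}-b+1)\,u_{k;m}=\sum_{j=1}^{m}\binom{m}{j}\Big(\sum_{\substack{0\le a<b\\ a\ne d}}a^j\Big)u_{k;m-j}+\sum_{j=0}^{m}\binom{m}{j}d^j\,u_{k-1;m-j},$$ with the convention $0^0=1$.
   Context: Fix $b\ge2$ and $d\in\{0,\dots,b-1\}$. A string is a finite sequence $X=(d_l,\dots,d_1)$ of digits in $\{0,\dots,b-1\}$ (leading zeros allowed), of length $|X|=l\ge0$; its value is $n(X)=\sum_{i=1}^{l}d_ib^{i-1}$ ($0$ for the empty string). For $k\ge0$, $\mu_k=\sum_{X}b^{-|X|}\delta_{n(X)/b^{|X|}}$, the sum over all strings $X$ containing $d$ exactly $k$ times; it is a finite measure on $[0,1)$ of total mass $b$. The moments are $u_{k;m}=\int_{[0,1)}x^m\,d\mu_k(x)$. *)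

(* Defs.v *)
From HB Require Import structures.
From mathcomp Require Import all_boot all_order all_algebra.
From mathcomp Require Import all_classical all_reals all_analysis.
Set Implicit Arguments. Unset Strict Implicit. Unset Printing Implicit Defensive.
Import Order.TTheory GRing.Theory Num.Theory.
Local Open Scope ring_scope.

(* A string of length l over the digits {0,...,b-1} is an l.-tuple 'I_b;
   position i (0-based) carries the digit d_{i+1}, of weight b^i. *)

Definition strpt (R : realType) (b l : nat) (X : l.-tuple 'I_b) : R :=
  (\sum_(i < l) (tnth X i)%:R * (b%:R) ^+ i) / (b%:R ^+ l).

Definition occ (b d l : nat) (X : l.-tuple 'I_b) : nat :=
  count (fun a : 'I_b => nat_of_ord a == d) X.

(* u_{k;m} = \int x^m d mu_k, mu_k = sum_X b^{-|X|} delta_{n(X)/b^|X|},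
   i.e. the (nonnegative, order independent) sum over all strings X with
   exactly k occurrences of d of  b^{-|X|} (n(X)/b^|X|)^m,
   grouped by length, valued in the extended reals. *)
Definition moment (R : realType) (b d k m : nat) : \bar R :=
  (\sum_(0 <= l <oo)
     (\sum_(X : l.-tuple 'I_b | occ d X == k)
        (((b%:R ^+ l)^-1 * (strpt R X) ^+ m)%:E)))%E.

(* Main.v *)
Require Import Defs.
From HB Require Import structures.
From mathcomp Require Import all_boot all_order all_algebra.
From mathcomp Require Import all_classical all_reals all_analysis.
From mathcomp Require Import ring lra.
Import Order.TTheory GRing.Theory Num.Theory.
Local Open Scope ring_scope.
Lemma sum_tuple_rcons (V : nmodType) (T : finType) (l : nat)
  (P : pred ((l.+1).-tuple T)) (f : (l.+1).-tuple T -> V) :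
  \sum_(X | P X) f X = \sum_(a : T) \sum_(Y : l.-tuple T | P [tuple of rcons Y a]) f [tuple of rcons Y a].
Proof.
rewrite [RHS]pair_big_dep /=.
pose h := fun p : T * l.-tuple T => [tuple of rcons p.2 p.1].
pose g := fun X : (l.+1).-tuple T =>
  (last (thead X) (behead X), [tuple of belast (thead X) (behead_tuple X)]).
rewrite (reindex h) /=; last first.
  exists g => [[a Y] _|X _].
    apply/eqP; rewrite xpair_eqE; apply/andP; split; apply/eqP.
      rewrite /g /h /=.
      set t := [tuple of rcons Y a].
      have E : (thead t :: behead t) = rcons Y a := congr1 val (esym (tuple_eta t)).
      have -> : last (thead t) (behead t) = last a (thead t :: behead t) by [].
      by rewrite E last_rcons.
    apply: val_inj => /=; rewrite /g /h /=.
    case: Y => [[|y s] Hs] //=.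
    by rewrite /thead (tnth_nth y) /= belast_rcons.
  apply: val_inj; rewrite /g /h /=.
  by rewrite -lastI [in RHS](tuple_eta X).
by apply: eq_bigl => -[a Y].
Qed.
Lemma occ_rcons (b d l : nat) (Y : l.-tuple 'I_b) (a : 'I_b) :
  occ d [tuple of rcons Y a] = (occ d Y + (nat_of_ord a == d))%N.
Proof. by rewrite /occ /= -cats1 count_cat /= addn0. Qed.

Lemma strpt_rcons (R : realType) (b l : nat) (hb : (0 < b)%N) (Y : l.-tuple 'I_b) (a : 'I_b) :
  strpt R [tuple of rcons Y a] = ((a%:R : R) + strpt R Y) / b%:R.
Proof.
rewrite /strpt big_ord_recr /=.
have -> : \sum_(i < l) (tnth [tuple of rcons Y a] (widen_ord (leqnSn l) i))%:R * (b%:R:R) ^+ i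
   = \sum_(i < l) (tnth Y i)%:R * b%:R ^+ i.
  apply: eq_bigr => i _; congr (_%:R * _).
  rewrite (tnth_nth a) /= nth_rcons size_tuple ltn_ord -tnth_nth //.
have -> : tnth [tuple of rcons Y a] ord_max = a.
  by rewrite (tnth_nth a) /= nth_rcons size_tuple ltnn eqxx.
have hB : (b%:R : R) != 0 by rewrite pnatr_eq0 -lt0n.
have hBl : (b%:R : R) ^+ l != 0 by rewrite expf_neq0.
rewrite exprSr; field.
by rewrite hBl hB.
Qed.


Lemma strpt_ge0 (R : realType) (b l : nat) (X : l.-tuple 'I_b) : 0 <= strpt R X.
Proof.
rewrite /strpt divr_ge0 ?exprn_ge0 ?ler0n //.
by apply: sumr_ge0 => i _; rewrite mulr_ge0 ?exprn_ge0 ?ler0n.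
Qed.

Lemma strpt_le1 (R : realType) (b l : nat) (hb : (0 < b)%N) (X : l.-tuple 'I_b) : strpt R X <= 1.
Proof.
have hB : (0 : R) < b%:R by rewrite ltr0n.
rewrite /strpt ler_pdivrMr ?exprn_gt0 // mul1r.
have geo : forall n, \sum_(i < n) ((b%:R : R) - 1) * b%:R ^+ i = b%:R ^+ n - 1.
  elim=> [|n IH]; first by rewrite big_ord0 expr0 subrr.
  rewrite big_ord_recr /= IH exprS; ring.
apply: (le_trans (y := \sum_(i < l) ((b%:R : R) - 1) * b%:R ^+ i)).
  apply: ler_sum => i _; apply: ler_wpM2r; first by rewrite exprn_ge0 // ltW.
  by rewrite lerBrDr natr1 ler_nat (ltn_ord (tnth X i)).
by rewrite geo lerBlDr lerDl.
Qed.
Definition F (R : realType) (b d k l m : nat) : R :=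
  \sum_(X : l.-tuple 'I_b | occ d X == k) ((b%:R ^+ l)^-1 * strpt R X ^+ m).
Definition Hf (R : realType) (b d k l m : nat) : R :=
  if k is k'.+1 then F R b d k' l m else 0.
Definition Acoef (R : realType) (b d m j : nat) : R :=
  'C(m, j)%:R * \sum_(a < b | nat_of_ord a != d) (a%:R : R) ^+ j.
Definition Bcoef (R : realType) (d m j : nat) : R := 'C(m, j)%:R * (d%:R : R) ^+ j.

Lemma F_succ (R : realType) (b d : nat) (hb : (0 < b)%N) (hd : (d < b)%N) (k l m : nat) :
  (b%:R : R) ^+ m.+1 * F R b d k l.+1 m =
  \sum_(j < m.+1) Acoef R b d m j * F R b d k l (m - j)
  + \sum_(j < m.+1) Bcoef R d m j * Hf R b d k l (m - j).
Proof.
have hB : (b%:R : R) != 0 by rewrite pnatr_eq0 -lt0n.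
have E : forall (a : R) (P : pred (l.-tuple 'I_b)),
  \sum_(j < m.+1) ('C(m, j)%:R * a ^+ j) *
     \sum_(Y | P Y) (((b%:R : R) ^+ l)^-1 * strpt R Y ^+ (m - j))
  = \sum_(Y | P Y) ((b%:R : R) ^+ l)^-1 * (a + strpt R Y) ^+ m.
  move=> a P; under eq_bigr do rewrite mulr_sumr.
  rewrite exchange_big /=; apply: eq_bigr => Y _.
  rewrite addrC exprDn mulr_sumr; apply: eq_bigr => j _.
  rewrite -mulr_natl; ring.
rewrite /F sum_tuple_rcons mulr_sumr.
under eq_bigr => a _.
  rewrite mulr_sumr.
  under eq_bigr => Y _ do rewrite strpt_rcons // expr_div_n.
  over.
rewrite (bigD1 (Ordinal hd)) //= addrC; congr (_ + _).
- rewrite /Acoef.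
  symmetry; under eq_bigr do rewrite [_ * \sum_(a < b | _) _]mulr_sumr mulr_suml.
  rewrite exchange_big /=.
  rewrite (eq_bigl (fun a : 'I_b => nat_of_ord a != d)); last first.
    by move=> a; congr negb; apply/eqP/eqP => [->|H] //; apply: val_inj.
  apply: eq_bigr => a Ha.
  rewrite E; apply: eq_big => [Y|Y _].
    by rewrite occ_rcons (negbTE Ha) addn0.
  set z := (_ + strpt R Y) ^+ m; rewrite !exprS; field; by rewrite !expf_neq0 ?hB.
- symmetry; rewrite /Bcoef /Hf.
  case: k => [|k].
    rewrite big1 ?big_pred0 //.
      by move=> Y; rewrite occ_rcons /= eqxx addn1.
    by move=> j _; rewrite mulr0.
  rewrite E; apply: eq_big => [Y|Y _].
    by rewrite occ_rcons /= eqxx addn1 eqSS.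
  set z := (_ + strpt R Y) ^+ m; rewrite !exprS; field; by rewrite !expf_neq0 ?hB.
Qed.
Lemma F_ge0 (R : realType) (b d k l m : nat) : 0 <= F R b d k l m.
Proof.
apply: sumr_ge0 => X _; rewrite mulr_ge0 ?invr_ge0 ?exprn_ge0 ?ler0n ?strpt_ge0 //.
Qed.

Lemma Hf_ge0 (R : realType) (b d k l m : nat) : 0 <= Hf R b d k l m.
Proof. by case: k => [|k] /=; rewrite ?F_ge0. Qed.

Lemma Acoef_ge0 (R : realType) (b d m j : nat) : 0 <= Acoef R b d m j.
Proof. by rewrite mulr_ge0 ?ler0n // sumr_ge0 // => a _; rewrite exprn_ge0 ?ler0n. Qed.

Lemma Bcoef_ge0 (R : realType) (d m j : nat) : 0 <= Bcoef R d m j.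
Proof. by rewrite mulr_ge0 ?ler0n ?exprn_ge0 ?ler0n. Qed.

Lemma F_le (R : realType) (b d k l m : nat) (hb : (0 < b)%N) : F R b d k l m <= F R b d k l 0.
Proof.
apply: ler_sum => X _; rewrite expr0 ler_wpM2l ?invr_ge0 ?exprn_ge0 ?ler0n //.
by rewrite exprn_ile1 ?strpt_ge0 ?strpt_le1.
Qed.

Lemma F_l0 (R : realType) (b d k m : nat) :
  F R b d k 0 m = if k == 0%N then (0 : R) ^+ m else 0.
Proof.
rewrite /F big_mkcond (big_pred1 [tuple]) /=; last by move=> X /=; rewrite tuple0; apply/esym/eqP.
have -> : occ d ([tuple] : 0.-tuple 'I_b) = 0%N by [].
rewrite eq_sym; case: eqP => // _.
by rewrite /strpt big_ord0 mul0r expr0 invr1 mul1r.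
Qed.

Lemma Acoef0 (R : realType) (b d m : nat) (hd : (d < b)%N) : Acoef R b d m 0 = b%:R - 1.
Proof.
rewrite /Acoef bin0 mul1r.
under eq_bigr do rewrite expr0.
rewrite (eq_bigl (predC1 (Ordinal hd))); last first.
  by move=> a /=; congr negb; apply/eqP/eqP => [->|H] //; apply: val_inj.
rewrite sumr_const cardC1 card_ord.
have hb : (0 < b)%N by apply: leq_ltn_trans hd.
by rewrite -{2}(prednK hb) -natr1 addrK.
Qed.

Local Open Scope ereal_scope.

Definition U (R : realType) (b d k m : nat) : \bar R :=
  \sum_(0 <= l <oo) (F R b d k l m)%:E.

Lemma momentU (R : realType) (b d k m : nat) : moment R b d k m = U R b d k m.
Proof. by apply: eq_eseriesr => l _; rewrite sumEFin. Qed.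

Lemma U_ge0 (R : realType) (b d k m : nat) : 0 <= U R b d k m.
Proof. by apply: nneseries_ge0 => l _ _; rewrite lee_fin F_ge0. Qed.

Lemma shift_series (R : realType) (f : nat -> R) : (forall l, (0 <= f l)%R) ->
  \sum_(0 <= l <oo) (f l)%:E = (f 0%N)%:E + \sum_(0 <= l <oo) (f l.+1)%:E.
Proof.
move=> f0; rewrite nneseries_recl //; last by move=> l _; rewrite lee_fin.
congr (_ + _); rewrite -nneseries_addn; last by move=> l; rewrite lee_fin.
by apply: eq_eseriesr => l _; rewrite addn1.
Qed.

Definition HU (R : realType) (b d k m : nat) : \bar R :=
  \sum_(0 <= l <oo) (Hf R b d k l m)%:E.

Lemma series_rec (R : realType) (b d : nat) (hb : (0 < b)%N) (hd : (d < b)%N) (k m : nat) :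
  (((b%:R : R) ^+ m.+1)%:E * \sum_(0 <= l <oo) (F R b d k l.+1 m)%:E =
  \sum_(j < m.+1) (Acoef R b d m j)%:E * U R b d k (m - j)
  + \sum_(j < m.+1) (Bcoef R d m j)%:E * HU R b d k (m - j))%E.
Proof.
rewrite /HU -nneseriesZl; last by move=> l _; rewrite lee_fin F_ge0.
under eq_eseriesr => l _ do rewrite -EFinM (F_succ _ _ _ hb hd) EFinD -!sumEFin.
rewrite nneseriesD; first last.
- by move=> l _ _; rewrite sume_ge0 // => j _; rewrite lee_fin mulr_ge0 ?Bcoef_ge0 ?Hf_ge0.
- by move=> l _ _; rewrite sume_ge0 // => j _; rewrite lee_fin mulr_ge0 ?Acoef_ge0 ?F_ge0.
rewrite (@nneseries_sum _ (index_enum 'I_m.+1) xpredT); last first.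
  by move=> j l _; rewrite lee_fin mulr_ge0 ?Acoef_ge0 ?F_ge0.
rewrite (@nneseries_sum _ (index_enum 'I_m.+1) xpredT); last first.
  by move=> j l _; rewrite lee_fin mulr_ge0 ?Bcoef_ge0 ?Hf_ge0.
congr (_ + _); apply: eq_bigr => j _.
  by under eq_eseriesr do rewrite EFinM; rewrite nneseriesZl // => l _; rewrite lee_fin F_ge0.
by under eq_eseriesr do rewrite EFinM; rewrite nneseriesZl // => l _; rewrite lee_fin Hf_ge0.
Qed.
Local Open Scope ring_scope.

Lemma Hf_series (R : realType) (b d k m : nat) :
  (HU R b d k m = if k is k'.+1 then U R b d k' m else 0)%E.
Proof. by case: k => [|k] //=; exact: eseries0. Qed.

Lemma F_succ0 (R : realType) (b d : nat) (hb : (0 < b)%N) (hd : (d < b)%N) (k l : nat) :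
  ((b%:R : R) * F R b d k l.+1 0 = (b%:R - 1) * F R b d k l 0 + Hf R b d k l 0)%R.
Proof.
have := F_succ R b d hb hd k l 0; rewrite expr1 => ->.
by rewrite !big_ord1 Acoef0 // /Bcoef bin0 expr0 mulr1 mul1r.
Qed.

Lemma partial_le (R : realType) (b d : nat) (hb : (0 < b)%N) (hd : (d < b)%N) (L k : nat) :
  (\sum_(l < L) F R b d k l 0 <= (b%:R : R))%R.
Proof.
have hB : (0 : R) < b%:R by rewrite ltr0n.
elim: L k => [|L IH] k; first by rewrite big_ord0 ler0n.
rewrite big_ord_recl /=.
rewrite -(ler_pM2l hB) mulrDr.
have -> : (b%:R * \sum_(i < L) F R b d k (bump 0 i) 0
          = (b%:R - 1) * \sum_(i < L) F R b d k i 0 + \sum_(i < L) Hf R b d k i 0)%R.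
  rewrite !mulr_sumr -big_split /=; apply: eq_bigr => i _.
  by rewrite /bump /= add1n F_succ0.
have hb1 : (0 : R) <= b%:R - 1 by rewrite subr_ge0 (ler_nat _ 1).
have Hk := IH k.
case: k Hk => [|k] Hk.
  rewrite F_l0 /= expr0 mulr1 big1_eq addr0.
  have := ler_wpM2l hb1 Hk; nra.
rewrite F_l0 /= mulr0 add0r /Hf.
have := ler_wpM2l hb1 Hk; have := IH k; nra.
Qed.

Lemma U0_le (R : realType) (b d : nat) (hb : (0 < b)%N) (hd : (d < b)%N) (k : nat) :
  (U R b d k 0 <= (b%:R)%:E)%E.
Proof.
apply: lime_le; first by apply: is_cvg_nneseries => l _ _; rewrite lee_fin F_ge0.
apply: nearW => n /=.
by rewrite sumEFin big_mkord lee_fin partial_le.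
Qed.

Lemma U_le (R : realType) (b d : nat) (hb : (0 < b)%N) (k m : nat) :
  (U R b d k m <= U R b d k 0)%E.
Proof.
apply: lee_nneseries => l _; first by rewrite lee_fin F_ge0.
by rewrite lee_fin F_le.
Qed.

Definition Mr (R : realType) (b d k m : nat) : R := fine (U R b d k m).

Lemma UE (R : realType) (b d : nat) (hb : (0 < b)%N) (hd : (d < b)%N) (k m : nat) :
  U R b d k m = (Mr R b d k m)%:E.
Proof.
rewrite /Mr fineK // ge0_fin_numE ?U_ge0 //.
apply: (le_lt_trans (U_le R b d hb k m)).
by apply: (le_lt_trans (U0_le R b d hb hd k)); rewrite ltry.
Qed.
Definition Hr (R : realType) (b d k m : nat) : R :=
  if k is k'.+1 then Mr R b d k' m else 0.

Lemma recR (R : realType) (b d : nat) (hb : (0 < b)%N) (hd : (d < b)%N) (k m : nat) :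
  (b%:R : R) ^+ m.+1 * Mr R b d k m =
  (b%:R : R) ^+ m.+1 * F R b d k 0 m
  + \sum_(j < m.+1) Acoef R b d m j * Mr R b d k (m - j)
  + \sum_(j < m.+1) Bcoef R d m j * Hr R b d k (m - j).
Proof.
have S := shift_series R (fun l => F R b d k l m) (fun l => F_ge0 R b d k l m).
have Rc := series_rec R b d hb hd k m.
move: S Rc; rewrite -/(U R b d k m) (UE R b d hb hd k m).
case: (\sum_(0 <= l <oo) (F R b d k l.+1 m)%:E)%E => [t| |] //.
move=> /(congr1 fine) /= Et.
have -> : (\sum_(j < m.+1) ((Acoef R b d m j)%:E * U R b d k (m - j)))%E
         = (\sum_(j < m.+1) Acoef R b d m j * Mr R b d k (m - j))%:E.
  by rewrite -sumEFin; apply: eq_bigr => j _; rewrite UE.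
have -> : (\sum_(j < m.+1) ((Bcoef R d m j)%:E * HU R b d k (m - j)))%E
         = (\sum_(j < m.+1) Bcoef R d m j * Hr R b d k (m - j))%:E.
  rewrite -sumEFin; apply: eq_bigr => j _; rewrite Hf_series /Hr.
  by case: k {Et} => [|k] //=; rewrite ?mule0 ?mulr0 // UE.
move=> /(congr1 fine) /= E2.
by rewrite Et mulrDr E2 addrA.
Qed.
Lemma Mr_k0 (R : realType) (b d : nat) (hb : (0 < b)%N) (hd : (d < b)%N) (k : nat) :
  Mr R b d k 0 = b%:R.
Proof.
elim: k => [|k IH].
  have := recR R b d hb hd 0 0.
  rewrite F_l0 /= !big_ord1 Acoef0 // /Hr mulr0 addr0 expr0 mulr1 expr1 subn0 => H.
  lra.
have := recR R b d hb hd k.+1 0.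
rewrite F_l0 /= !big_ord1 Acoef0 // /Hr /Bcoef bin0 !expr0 !mulr1 mul1r expr1 subn0 IH => H.
lra.
Qed.

Theorem mainTheorem10 (R : realType) (b d : nat) (hb : (2 <= b)%N) (hd : (d < b)%N)
  (k : nat) (hk : (1 <= k)%N) :
  moment R b d k 0 = (b%:R)%:E /\
  forall m : nat,
    (((b%:R ^+ m.+1 - b%:R + 1 : R)%:E * moment R b d k m)
     = \sum_(j < m.+1 | (0 < j)%N)
          ((('C(m, j))%:R * \sum_(a < b | nat_of_ord a != d) (a%:R : R) ^+ j)%:E
             * moment R b d k (m - j)%N)
       + \sum_(j < m.+1)
          ((('C(m, j))%:R * (d%:R : R) ^+ j)%:E * moment R b d (k.-1) (m - j)%N))%E.
Proof.
have hb0 : (0 < b)%N by apply: leq_trans hb.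
split; first by rewrite momentU UE // Mr_k0.
move=> m.
rewrite momentU UE // -EFinM.
under eq_bigr do rewrite momentU UE // -EFinM.
under [X in (_ + X)%E]eq_bigr do rewrite momentU UE // -EFinM.
rewrite !sumEFin -EFinD; congr EFin.
case: k hk => [//|k] _ /=.
have := recR R b d hb0 hd k.+1 m.
rewrite F_l0 /= mulr0 add0r.
rewrite (bigD1 ord0) //= subn0 Acoef0 //.
have -> : \sum_(i < m.+1 | i != ord0) Acoef R b d m i * Mr R b d k.+1 (m - i)
   = \sum_(j < m.+1 | (0 < j)%N) ('C(m, j)%:R * \sum_(a < b | nat_of_ord a != d) (a%:R : R) ^+ j) * Mr R b d k.+1 (m - j).
  by apply: eq_bigl => j; rewrite -lt0n.
rewrite /Hr /Bcoef => H.
rewrite mulrDl mulrBl mul1r H; ring.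
Qed.
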